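(* In the setup described in the context, there exist polynomials $q_{kl}\in K[X]=K[X_{ij}\mid(i,j)\in N_0]$, for $1\le k\le v$ and $1\le l\le d$, depending only on the chosen ordered basis $B$ of $\mathbf P$, with the following property: for every $C\in\mathrm{GRASS}(\sigma)$ with coordinates $(c_{ij})_{(i,j)\in N_0}$, the point of $\mathbb P(\Lambda^a\mathbf P)$ corresponding (via Plücker) to $C$ is represented by $\mathbf c=C'_1\wedge\cdots\wedge C'_u\wedge C''_1\wedge\cdots\wedge C''_v\in\Lambda^a\mathbf P$, where $C'_i=b'_i-\sum_{1\le j\le d,\,(i,j)\in N_0}c_{ij}b_j$ for $1\le i\le u$ and $C''_k=b''_k-\sum_{l=1}^dq_{kl}(c_{ij})\,b_l$ for $1\le k\le v$. In particular, the coefficient of $\mathbf c$ on the basis vector $b'_1\wedge\cdots\wedge b'_u\wedge b''_1\wedge\cdots\wedge b''_v$ equals $1$.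
   Context: $K$ algebraically closed, $A=KQ/I$ basic finite-dimensional, $Q$ a finite quiver with vertices $e_1,\dots,e_n$, $J$ the Jacobson radical, $L+1$ the Loewy length; paths compose right to left. For $\mathbf d=(d_1,\dots,d_n)$, $d=\sum d_i$, $\mathbf P=\bigoplus_{r=1}^dAz_r$ is a projective cover of $\bigoplus_iS_i^{d_i}$ with top elements $z_r$ normed by vertices $e(r)$, $\widehat{\mathbf P}=\bigoplus_rKQz_r$, $a=\dim\mathbf P-d$; $\operatorname{Gr}(a,\mathbf P)\subseteq\mathbb P(\Lambda^a\mathbf P)$ via Plücker. A skeleton in $\widehat{\mathbf P}$ with radical layering $\mathbb S=(\mathbb S_0,\dots,\mathbb S_L)$, $\mathbb S_l=\bigoplus_iS_i^{m(l,i)}$, is a set $\sigma$ of paths $pz_r$ of length $\le L$ with exactly $m(l,i)$ paths of length $l$ ending in $e_i$, closed under initial subpaths. $\mathrm{GRASS}(\sigma)$ is the set of $A$-submodules $C\subseteq\mathbf P$ with $\underline{\dim}(\mathbf P/C)=\mathbf d$, radical layering of $\mathbf P/C$ equal to $\mathbb S$, such that the images of the paths of $\sigma$ form a basis of $\mathbf P/C$; assume $\mathrm{GRASS}(\sigma)\neq\varnothing$, so that $\sigma$ is identified with a linearly independent subset $\{b_1,\dots,b_d\}$ of $\mathbf P$. A path $b'$ in $\widehat{\mathbf P}$ of length $\le L$ is $\sigma$-critical if $b'\notin\sigma$ but every proper initial subpath of $b'$ lies in $\sigma$ (in particular $z_r\notin\sigma$ is $\sigma$-critical). For such $b'$, $\sigma(b')=\{b\in\sigma:\operatorname{length}(b)\ge\operatorname{length}(b'),\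 \operatorname{end}(b)=\operatorname{end}(b')\}$. Choose $\sigma$-critical paths $b'_1,\dots,b'_u$ whose images in $\mathbf P$ induce a basis of $(\sum_{b'\ \sigma\text{-critical}}Kb'+\sum_jKb_j)/\sum_jKb_j$, and paths $b''_1,\dots,b''_v$ in $\mathbf P$ such that $B=(b_1,\dots,b_d,b'_1,\dots,b'_u,b''_1,\dots,b''_v)=(w_1,\dots,w_{\dim\mathbf P})$ is an ordered basis of $\mathbf P$ (so $u+v=a$). Let $N_0=\{(i,j)\in\{1,\dots,u\}\times\{1,\dots,d\}: b_j\in\sigma(b'_i)\}$. Every $C\in\mathrm{GRASS}(\sigma)$ can be written uniquely as $C=\sum_{i=1}^uA\,(b'_i-\sum_{(i,j)\in N_0}c_{ij}b_j)$ with $c_{ij}\in K$, and $C\mapsto(c_{ij})$ is an isomorphism of $\mathrm{GRASS}(\sigma)$ onto a closed subvariety of $\mathbb A^{N_0}$; $(c_{ij})$ are called the coordinates of $C$. *)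

(* Defs.v *)
From HB Require Import structures.
From mathcomp Require Import all_boot all_order all_algebra.
From mathcomp Require Import falgebra.
Set Implicit Arguments. Unset Strict Implicit. Unset Printing Implicit Defensive.
Import GRing.Theory.
Local Open Scope ring_scope.

(* Polynomials in finitely many commuting variables indexed by X, given    *)
(* as polynomial expressions (every polynomial of K[X] is represented by   *)
(* such an expression and conversely).                                     *)
Inductive polyexpr (R : Type) (X : Type) : Type :=
  | PConst of R
  | PVar of X
  | PAdd of polyexpr R X & polyexpr R X
  | PMul of polyexpr R X & polyexpr R X.

Fixpoint peval (R : ringType) (X : Type) (f : X -> R) (p : polyexpr R X) : R :=
  match p with
  | PConst c => c
  | PVar x => f x
  | PAdd p q => peval f p + peval f q
  | PMul p q => peval f p * peval f q
  end.

Fixpoint pvars (R X : Type) (p : polyexpr R X) : seq X :=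
  match p with
  | PConst _ => [::]
  | PVar x => [:: x]
  | PAdd p q => pvars p ++ pvars q
  | PMul p q => pvars p ++ pvars q
  end.

Section Setting.
Variable K : fieldType.
Variable A : falgType K.
(* quiver Q: vertices 'I_n, arrows Arr with source / target *)
Variable n : nat.
Variable Arr : finType.
Variables (src tgt : Arr -> 'I_n).
(* images in A of the vertices e_i and of the arrows *)
Variable ev : 'I_n -> A.
Variable av : Arr -> A.

(* A path of Q is a starting vertex and the list of its arrows in the order
   in which they are traversed (so the path alpha_k ... alpha_1, composed
   right to left, is the list [:: alpha_1; ...; alpha_k]). *)
Fixpoint composable (v : 'I_n) (p : seq Arr) : bool :=
  if p is a :: p' then (src a == v) && composable (tgt a) p' else true.

Definition wordval (v : 'I_n) (p : seq Arr) : A :=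
  foldl (fun x a => av a * x) (ev v) p.

(* (ev, av) presents A as KQ/I with I admissible: the quiver relations hold
   (so paths induce an algebra map KQ -> A), this map is onto, its kernel I
   is contained in the ideal of paths of length >= 2 and contains all paths
   of length >= m for some m. *)
Definition is_KQ_mod_admissible : Prop :=
  [/\ [/\ (forall i j : 'I_n, ev i * ev j = (if i == j then ev i else 0)),
          \sum_(i < n) ev i = 1 &
          (forall a : Arr, ev (tgt a) * av a = av a /\ av a * ev (src a) = av a)],
      (forall x : A, exists s : seq ('I_n * seq Arr),
          all (fun w => composable w.1 w.2) s /\
          x \in span (map (fun w => wordval w.1 w.2) s)),
      (forall (s : seq ('I_n * seq Arr)) (lam : 'I_n * seq Arr -> K),
          uniq s -> all (fun w => composable w.1 w.2) s ->
          \sum_(w <- s) lam w *: wordval w.1 w.2 = 0 ->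
          forall w, w \in s -> (size w.2 <= 1)%N -> lam w = 0)
    & (exists m : nat, forall (v : 'I_n) (p : seq Arr),
          composable v p -> (m <= size p)%N -> wordval v p = 0)].

Definition radA (W : {vspace A}) : {vspace A} :=
  (\sum_(a : Arr) (amull (av a) @: W))%VS.
Definition JpowA (l : nat) : {vspace A} := iter l radA fullv.

Definition loewy_length_succ (L : nat) : Prop :=
  JpowA L.+1 = 0%VS /\ JpowA L != 0%VS.

(* The projective module P = (+)_{r<d} A z_r, with z_r = e_{e r} in slot r,
   realised inside V = A^d. *)
Variable d : nat.
Variable e : 'I_d -> 'I_n.

Definition V := {ffun 'I_d -> A}.

Definition actV (a : A) (x : V) : V := [ffun r => a * x r].
Definition actE (a : A) : 'End(V) := linfun (actV a).

Definition cyc (x : V) : {vspace V} := limg (linfun (fun a : A => actV a x)).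

Definition zvec (r : 'I_d) : V := [ffun r' => if r' == r then ev (e r) else 0].

Definition Pspace : {vspace V} := (\sum_(r < d) cyc (zvec r))%VS.

Definition dvec (i : 'I_n) : nat := #|[pred r | e r == i]|.

Definition radP (W : {vspace V}) : {vspace V} :=
  (\sum_(a : Arr) (actE (av a) @: W))%VS.
Definition JP (l : nat) : {vspace V} := iter l radP Pspace.

Definition emul (i : 'I_n) (W : {vspace V}) : {vspace V} := (actE (ev i) @: W)%VS.

(* paths in \hat P : p z_r, given as (r, arrows of p) *)
Definition HPath := ('I_d * seq Arr)%type.
Definition hvalid (q : HPath) : bool := composable (e q.1) q.2.
Definition hlen (q : HPath) : nat := size q.2.
Definition hend (q : HPath) : 'I_n := last (e q.1) [seq tgt a | a <- q.2].
Definition img (q : HPath) : V :=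
  [ffun r' => if r' == q.1 then wordval (e q.1) q.2 else 0].

Variable L : nat.
Variable sig : 'I_d -> HPath.

Definition sigset : seq HPath := [seq sig j | j <- enum 'I_d].

Definition is_skeleton : Prop :=
  [/\ injective sig,
      (forall j, hvalid (sig j) && (hlen (sig j) <= L)%N)
    & forall j k, (k <= hlen (sig j))%N -> ((sig j).1, take k (sig j).2) \in sigset].

Definition mcount (l : nat) (i : 'I_n) : nat :=
  #|[pred j | (hlen (sig j) == l) && (hend (sig j) == i)]|.

Definition sigimgs : seq V := [seq img (sig j) | j <- enum 'I_d].

Definition inGRASS (C : {vspace V}) : Prop :=
  [/\ (C <= Pspace)%VS,
      (forall (a : A) (x : V), x \in C -> actV a x \in C),
      (* dimension vector of P/C is d : dim e_i (P/C) = d_i *)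
      (forall i, (\dim (emul i Pspace + C) - \dim C)%N = dvec i),
      (* radical layering of P/C is S : dim e_i (J^l M / J^(l+1) M) = m(l,i) *)
      (forall l i, (l <= L)%N ->
        (\dim (emul i (JP l) + C) - \dim (emul i (JP l.+1) + C))%N = mcount l i)
    & (* the images of sigma form a basis of P/C *)
      [/\ free sigimgs, (<<sigimgs>> + C)%VS = Pspace & (<<sigimgs>> :&: C)%VS = 0%VS]].

Definition critical (q : HPath) : bool :=
  [&& hvalid q, (hlen q <= L)%N, q \notin sigset &
      [forall k : 'I_(hlen q), (q.1, take k q.2) \in sigset]].

(* N_0 : b_j in sigma(b'_i) *)
Definition N0rel (crit : HPath) (j : 'I_d) : bool :=
  (hlen crit <= hlen (sig j))%N && (hend (sig j) == hend crit).

End Setting.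

(* Main.v *)
Require Import Defs.
From HB Require Import structures.
From mathcomp Require Import all_boot all_order all_algebra.
From mathcomp Require Import falgebra.

Set Implicit Arguments. Unset Strict Implicit.
Import GRing.Theory.
Local Open Scope ring_scope.

Lemma wordval_rcons (K : fieldType) (A : falgType K) (n : nat) (Arr : finType)
  (ev : 'I_n -> A) (av : Arr -> A) v p a :
  wordval ev av v (rcons p a) = av a * wordval ev av v p.
Proof. by rewrite /wordval -cats1 foldl_cat. Qed.

Lemma ev_wordval (K : fieldType) (A : falgType K) (n : nat) (Arr : finType)
  (tgt : Arr -> 'I_n) (ev : 'I_n -> A) (av : Arr -> A) v p :
  (forall i j, ev i * ev j = (if i == j then ev i else 0)) ->
  (forall a, ev (tgt a) * av a = av a) ->
  ev (last v [seq tgt a | a <- p]) * wordval ev av v p = wordval ev av v p.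
Proof.
move=> He Ha; case/lastP: p => [|p a]; first by rewrite /= /wordval /= He eqxx.
by rewrite map_rcons last_rcons wordval_rcons mulrA Ha.
Qed.

Lemma composable_rcons (n : nat) (Arr : finType) (src tgt : Arr -> 'I_n) v p a :
  composable src tgt v (rcons p a) =
  composable src tgt v p && (src a == last v [seq tgt b | b <- p]).
Proof.
elim: p v => [|b p IH] v /=; first by rewrite andbT.
by rewrite IH andbA.
Qed.

Lemma wordval_J (K : fieldType) (A : falgType K) (n : nat) (Arr : finType)
  (ev : 'I_n -> A) (av : Arr -> A) v p :
  wordval ev av v p \in JpowA av (size p).
Proof.
elim/last_ind: p => [|p a IH]; first by rewrite memvf.
rewrite size_rcons wordval_rcons /JpowA iterS -/(JpowA av (size p)).
rewrite memvE; apply: (sumv_sup a) => //; rewrite -memvE.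
have -> : av a * wordval ev av v p = amull (av a) (wordval ev av v p) by rewrite lfunE.
exact: memv_img.
Qed.

Lemma peval_big (R : ringType) (X : Type) (f : X -> R) (I : finType) (F : I -> polyexpr R X) :
  peval f (\big[@PAdd R X/PConst _ 0]_(i : I) F i) = \sum_(i : I) peval f (F i).
Proof. by rewrite (big_morph (peval f) (id1:=0) (op1:=+%R)). Qed.

Lemma pvars_big (R : Type) (X : Type) (P : pred X) (I : finType) (F : I -> polyexpr R X) (z : R) :
  (forall i, all P (pvars (F i))) -> all P (pvars (\big[@PAdd R X/PConst _ z]_(i : I) F i)).
Proof.
move=> H; elim/big_ind: _ => //= x y Hx Hy; by rewrite all_cat Hx Hy.
Qed.
Definition actat (K : fieldType) (A : falgType K) (d : nat) (x : V A d) := fun a : A => actV a x.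
Lemma actat_lin (K : fieldType) (A : falgType K) (d : nat) (x : V A d) : linear (actat x).
Proof. by move=> k a b; apply/ffunP => r; rewrite !ffunE mulrDl scalerAl. Qed.
HB.instance Definition _ (K : fieldType) (A : falgType K) (d : nat) (x : V A d) :=
  GRing.isLinear.Build K A (V A d) *:%R (actat x) (actat_lin x).
Lemma in_cyc (K : fieldType) (A : falgType K) (d : nat) (x : V A d) : x \in cyc x.
Proof.
have -> : cyc x = limg (linfun (actat x)) by [].
have Hx : x = linfun (actat x) 1 by rewrite lfunE /actat; apply/ffunP => r; rewrite ffunE mul1r.
by rewrite {1}Hx; apply: memv_img; exact: memvf.
Qed.

Unset Implicit Arguments. Set Strict Implicit.
Theorem lemma6p2
  (K : closedFieldType) (A : falgType K)
  (n : nat) (Arr : finType) (src tgt : Arr -> 'I_n)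
  (ev : 'I_n -> A) (av : Arr -> A)
  (HA : is_KQ_mod_admissible src tgt ev av)
  (L : nat) (HL : loewy_length_succ av L)
  (d : nat) (e : 'I_d -> 'I_n)
  (sig : 'I_d -> HPath Arr d)
  (Hsig : is_skeleton src tgt e L sig)
  (Hne : exists C, inGRASS tgt ev av e L sig C)
  (u v : nat) (crit : 'I_u -> HPath Arr d) (xtra : 'I_v -> HPath Arr d)
  (Hcrit : forall i, critical src tgt e L sig (crit i))
  (Hcritbasis :
     free (sigimgs ev av e sig ++ [seq img ev av e (crit i) | i <- enum 'I_u]) /\
     (forall q, critical src tgt e L sig q ->
        img ev av e q \in
          span (sigimgs ev av e sig ++ [seq img ev av e (crit i) | i <- enum 'I_u])))
  (Hxtra : forall k, hvalid src tgt e (xtra k))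
  (HB : basis_of (Pspace ev e)
          (cat_tuple [tuple img ev av e (sig j) | j < d]
             (cat_tuple [tuple img ev av e (crit i) | i < u]
                        [tuple img ev av e (xtra k) | k < v]))) :
  exists q : 'I_v -> 'I_d -> polyexpr K ('I_u * 'I_d),
    (forall k l, all (fun x => N0rel tgt e sig (crit x.1) x.2) (pvars (q k l))) /\
    forall (C : {vspace V A d}) (c : 'I_u -> 'I_d -> K),
      inGRASS tgt ev av e L sig C ->
      C = (\sum_(i < u) cyc
             (img ev av e (crit i)
              - \sum_(j < d | N0rel tgt e sig (crit i) j) c i j *: img ev av e (sig j)))%VS ->
      let C' := fun i : 'I_u =>
        img ev av e (crit i)
        - \sum_(j < d | N0rel tgt e sig (crit i) j) c i j *: img ev av e (sig j) in
      let C'' := fun k : 'I_v =>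
        img ev av e (xtra k)
        - \sum_(l < d) peval (fun x => c x.1 x.2) (q k l) *: img ev av e (sig l) in
      let Cvec := fun i : 'I_(u + v) =>
        match split i with inl i' => C' i' | inr k => C'' k end in
      let B := cat_tuple [tuple img ev av e (sig j) | j < d]
                 (cat_tuple [tuple img ev av e (crit i) | i < u]
                            [tuple img ev av e (xtra k) | k < v]) in
      basis_of C [tuple Cvec i | i < u + v] /\
      \det (\matrix_(i < u + v, j < u + v) coord B (rshift d j) (Cvec i)) = 1.
Proof.
case: HA => [[Hee Hesum Hea] _ _ _].
case: HL => HL0 _.
case: Hsig => Hinj Hval Hpref.
case: Hcritbasis => Hfree Hspan.
pose S := sigimgs ev av e sig ++ [seq img ev av e (crit i) | i <- enum 'I_u].
pose N0 := fun x : 'I_u * 'I_d => N0rel tgt e sig (crit x.1) x.2.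
pose HC := fun (C : {vspace V A d}) (c : 'I_u -> 'I_d -> K) =>
   (forall a x, x \in C -> actV a x \in C) /\
   (forall i, img ev av e (crit i)
        - \sum_(j < d | N0rel tgt e sig (crit i) j) c i j *: img ev av e (sig j) \in C).
pose Good := fun x : V A d => exists f : 'I_d -> polyexpr K ('I_u * 'I_d),
   (forall l, all N0 (pvars (f l))) /\
   forall C c, HC C c ->
     x - \sum_(l < d) peval (fun x => c x.1 x.2) (f l) *: img ev av e (sig l) \in C.
have G0 : Good 0.
  exists (fun _ => PConst _ 0); split => // C c _.
  by rewrite /= big1 ?subr0 ?mem0v // => l _; rewrite scale0r.
have GD : forall x y, Good x -> Good y -> Good (x + y).
  move=> x y [f [Hf Hfx]] [g [Hg Hgy]].
  exists (fun l => PAdd (f l) (g l)); split=> [l|C c HCc].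
    by rewrite /= all_cat Hf Hg.
  have -> : x + y - \sum_(l < d) peval (fun x => c x.1 x.2) (PAdd (f l) (g l)) *: img ev av e (sig l)
    = (x - \sum_(l < d) peval (fun x => c x.1 x.2) (f l) *: img ev av e (sig l))
      + (y - \sum_(l < d) peval (fun x => c x.1 x.2) (g l) *: img ev av e (sig l)).
    rewrite /= (eq_bigr (fun l => peval (fun x => c x.1 x.2) (f l) *: img ev av e (sig l)
        + peval (fun x => c x.1 x.2) (g l) *: img ev av e (sig l))); last by move=> l _; rewrite scalerDl.
    by rewrite big_split /= opprD addrACA.
  by rewrite memvD ?Hfx ?Hgy.
have GZ : forall k x, Good x -> Good (k *: x).
  move=> k x [f [Hf Hfx]].
  exists (fun l => PMul (PConst _ k) (f l)); split=> [l|C c HCc]; first by rewrite /= Hf.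
  have -> : k *: x - \sum_(l < d) peval (fun x => c x.1 x.2) (PMul (PConst _ k) (f l)) *: img ev av e (sig l)
    = k *: (x - \sum_(l < d) peval (fun x => c x.1 x.2) (f l) *: img ev av e (sig l)).
    by rewrite scalerBr scaler_sumr /=; congr (_ - _); apply: eq_bigr => l _; rewrite scalerA.
  by rewrite memvZ ?Hfx.
have Gsum : forall (I : finType) (F : I -> V A d), (forall i, Good (F i)) -> Good (\sum_(i : I) F i).
  by move=> I F HF; elim/big_ind: _ => //; apply: GD.
have Gsig : forall j, Good (img ev av e (sig j)).
  move=> j; exists (fun l => PConst _ (if l == j then 1 else 0)); split => // C c _.
  rewrite /= (bigD1 j) //= eqxx scale1r big1 ?addr0 ?subrr ?mem0v // => l /negbTE ->.
  by rewrite scale0r.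
have Gcrit : forall i, Good (img ev av e (crit i)).
  move=> i; exists (fun l => if N0rel tgt e sig (crit i) l then PVar K (i, l) else PConst _ 0).
  split=> [l|C c [_ HCi]]; first by case: ifP => H //=; rewrite /N0 /= H.
  rewrite (eq_bigr (fun l => if N0rel tgt e sig (crit i) l then c i l *: img ev av e (sig l) else 0)).
    by rewrite -big_mkcond; apply: HCi.
  by move=> l _; case: ifP => _ //=; rewrite scale0r.
have GS : forall x, x \in <<S>>%VS -> Good x.
  move=> x Hx; rewrite (coord_span (X := in_tuple S) Hx).
  apply: (Gsum) => i; apply: (GZ).
  have : (in_tuple S)`_i \in S by apply: mem_nth.
  rewrite mem_cat => /orP [/mapP [j _ ->] | /mapP [j _ ->]]; [exact: (Gsig) | exact: (Gcrit)].
have actD : forall a (x y : V A d), actV a (x + y) = actV a x + actV a y.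
  by move=> a x y; apply/ffunP => r; rewrite !ffunE mulrDr.
have act0 : forall a, actV a 0 = (0 : V A d).
  by move=> a; apply/ffunP => r; rewrite !ffunE mulr0.
have actB : forall a (x y : V A d), actV a (x - y) = actV a x - actV a y.
  by move=> a x y; apply/ffunP => r; rewrite !ffunE mulrBr.
have actZ : forall a k (x : V A d), actV a (k *: x) = k *: actV a x.
  by move=> a k x; apply/ffunP => r; rewrite !ffunE scalerAr.
have actS : forall a (F : 'I_d -> V A d), actV a (\sum_l F l) = \sum_l actV a (F l).
  by move=> a F; rewrite (big_morph (actV a) (actD a) (act0 a)).
have img_rcons : forall r p a, img ev av e (r, rcons p a) = actV (av a) (img ev av e (r, p)).
  move=> r p a; apply/ffunP => r'; rewrite !ffunE /=; case: ifP => _; last by rewrite mulr0.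
  exact: wordval_rcons.
have inS : forall q, q \in sigset sig -> img ev av e q \in <<S>>%VS.
  move=> q /mapP [j _ ->]; apply: memv_span; rewrite mem_cat; apply/orP; left.
  apply: (map_f (fun j => img ev av e (sig j))); exact: mem_enum.
have Skey : forall l a, actV (av a) (img ev av e (sig l)) \in <<S>>%VS.
  move=> l a; have Hvl := Hval l; have Hpl := Hpref l.
  case E: (sig l) Hvl Hpl => [r p] /andP [Hv HlenL] Hpl.
  rewrite -img_rcons.
  case Hin: ((r, rcons p a) \in sigset sig); first exact: inS.
  case Hc: (composable src tgt (e r) (rcons p a)); last first.
    have -> : img ev av e (r, rcons p a) = 0; last exact: mem0v.
    apply/ffunP => r'; rewrite !ffunE /=; case: ifP => // _.
    rewrite wordval_rcons -(ev_wordval (tgt:=tgt) (ev := ev) (av := av) (e r) p) //; last first.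
      by move=> b; case: (Hea b).
    move: Hc; rewrite composable_rcons (_ : composable src tgt (e r) p = true) // /= => Hne'.
    rewrite -[av a](proj2 (Hea a)) mulrA -(mulrA (av a)) Hee Hne' mulr0 mul0r.
    done.
  case Hs: (size p < L)%N; last first.
    have -> : img ev av e (r, rcons p a) = 0; last exact: mem0v.
    apply/ffunP => r'; rewrite !ffunE /=; case: ifP => // _.
    have Hsz : size (rcons p a) = L.+1.
      rewrite size_rcons; apply/eqP; rewrite eqSS eqn_leq HlenL /=.
      by rewrite leqNgt Hs.
    by move: (wordval_J ev av (e r) (rcons p a)); rewrite Hsz HL0 memv0 => /eqP.
  apply: Hspan; rewrite /critical /hvalid /hlen /= Hc size_rcons Hs Hin /=.
  apply/forallP => -[k Hk] /=.
  have Hk' : (k <= size p)%N by move: Hk; rewrite /hlen /= ?size_rcons ltnS.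
  rewrite -cats1 takel_cat //; exact: Hpl.
have Gact : forall a x, Good x -> Good (actV (av a) x).
  move=> a x [f [Hf Hfx]].
  have /fin_all_exists [g Hg] : forall l, exists g : 'I_d -> polyexpr K ('I_u * 'I_d),
      (forall m, all N0 (pvars (g m))) /\ forall C c, HC C c ->
      actV (av a) (img ev av e (sig l))
        - \sum_(m < d) peval (fun x => c x.1 x.2) (g m) *: img ev av e (sig m) \in C.
    by move=> l; apply: GS; apply: Skey.
  exists (fun m => \big[@PAdd _ _/PConst _ 0]_(l < d) PMul (f l) (g l m)); split.
    move=> m; apply: pvars_big => l /=; rewrite all_cat Hf; exact: (proj1 (Hg l)).
  move=> C c HCc; case: (HCc) => Hcl _.
  set pe := peval (fun x => c x.1 x.2).
  have E : actV (av a) x - \sum_(m < d) pe (\big[@PAdd _ _/PConst _ 0]_(l < d) PMul (f l) (g l m)) *: img ev av e (sig m)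
     = actV (av a) (x - \sum_(l < d) pe (f l) *: img ev av e (sig l))
       + \sum_(l < d) pe (f l) *: (actV (av a) (img ev av e (sig l))
             - \sum_(m < d) pe (g l m) *: img ev av e (sig m)).
    rewrite actB actS.
    under eq_bigr => m _ do rewrite /pe peval_big /= scaler_suml.
    rewrite exchange_big /=.
    under [X in _ = _ + X]eq_bigr => l _ do rewrite scalerBr scaler_sumr.
    rewrite sumrB.
    under [X in _ = _ + (_ - X)]eq_bigr => l _ do (under eq_bigr => m _ do rewrite scalerA).
    under [X in _ = (_ - X) + _]eq_bigr => l _ do rewrite actZ.
    by rewrite addrA subrK.
  rewrite E; apply: memvD; first by apply: Hcl; apply: Hfx.
  apply: memv_suml => l _; apply: memvZ; exact: (proj2 (Hg l)).
have Gpath : forall r p, Good (img ev av e (r, p)).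
  move=> r; elim/last_ind => [|p a IH]; last by rewrite img_rcons; apply: Gact.
  apply: GS; case Hin: ((r, [::]) \in sigset sig); first exact: inS.
  apply: Hspan; rewrite /critical /hvalid /hlen /= Hin /=; apply/forallP => -[].
by move=> m; rewrite ltn0.
have : forall k, Good (img ev av e (xtra k)) by move=> k; case: (xtra k) => r p; exact: Gpath.
move/fin_all_exists => [q Hq].
exists q; split; first by move=> k l; exact: (proj1 (Hq k) l).
move=> C c HG HCdef C' C'' Cvec B.
have HCc : HC C c.
  split; first by case: HG.
  move=> i; rewrite HCdef memvE; apply: (sumv_sup i) => //; rewrite -memvE; exact: in_cyc.
have CvecC : forall i, Cvec i \in C.
  move=> i; rewrite /Cvec; case: split => [i'|k]; first exact: (proj2 HCc).
  exact: (proj2 (Hq k) C c HCc).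
have Bfree : free B := basis_free HB.
have coordB : forall (m : 'I_(d + (u+v))) j, coord B (rshift d j) B`_m = (m == rshift d j)%:R.
  by move=> m j; rewrite coord_free.
have Bsig : forall j : 'I_d, img ev av e (sig j) = B`_(lshift (u+v) j).
  move=> j; rewrite /B /= nth_cat size_map size_enum_ord ltn_ord.
  by rewrite (nth_map j) ?size_enum_ord // nth_ord_enum.
have Bcrit : forall i : 'I_u, img ev av e (crit i) = B`_(rshift d (lshift v i)).
  move=> i; rewrite /B /= nth_cat size_map size_enum_ord ltnNge leq_addr /= addKn.
  rewrite nth_cat size_map size_enum_ord ltn_ord.
  by rewrite (nth_map i) ?size_enum_ord // nth_ord_enum.
have Bxtra : forall k : 'I_v, img ev av e (xtra k) = B`_(rshift d (rshift u k)).
  move=> k; rewrite /B /= nth_cat size_map size_enum_ord ltnNge leq_addr /= addKn.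
  rewrite nth_cat size_map size_enum_ord ltnNge leq_addr /= addKn.
  by rewrite (nth_map k) ?size_enum_ord // nth_ord_enum.
have lsF : forall (l : 'I_d) (j : 'I_(u+v)), (lshift (u+v) l == rshift d j) = false.
  by move=> l j; rewrite -val_eqE /= (ltn_eqF (ltn_addr _ (ltn_ord l))).
have sumF : forall (P : pred 'I_d) (F : 'I_d -> K) j,
    coord B (rshift d j) (\sum_(l < d | P l) F l *: img ev av e (sig l)) = 0.
  move=> P F j; rewrite linear_sum big1 // => l _.
  by rewrite linearZ /= Bsig coordB lsF mulr0.
have coordC : forall i j, coord B (rshift d j) (Cvec i) = (i == j)%:R.
  move=> i j; rewrite /Cvec; case: splitP => [i' Hi|k Hk].
    rewrite /C' linearB /= sumF subr0 Bcrit coordB.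
    by rewrite -[rshift _ _ == _]val_eqE -[i == j]val_eqE /= Hi eqn_add2l.
  rewrite /C'' linearB /= sumF subr0 Bxtra coordB.
  by rewrite -[rshift _ _ == _]val_eqE -[i == j]val_eqE /= Hk eqn_add2l.
have Mid : \matrix_(i < u + v, j < u + v) coord B (rshift d j) (Cvec i) = 1%:M.
  by apply/matrixP => i j; rewrite !mxE coordC.
split; last by rewrite Mid det1.
have Hdim : \dim C = (u + v)%N.
  case: HG => _ _ _ _ [Hsf Hsum Hcap].
  have := dimv_sum_cap <<sigimgs ev av e sig>> C.
  rewrite Hsum Hcap dimv0 addn0 (size_basis HB) (eqnP Hsf) size_map size_enum_ord.
  by move/eqP; rewrite eqn_add2l => /eqP.
rewrite basisEfree; apply/and3P; split.
- apply/freeP => k Hk i.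
  have := congr1 (coord B (rshift d i)) Hk; rewrite linear_sum linear0 => <-.
  rewrite (bigD1 i) //= big1 ?addr0.
    by rewrite linearZ /= nth_mktuple coordC eqxx mulr1.
  by move=> j /negbTE Hj; rewrite linearZ /= nth_mktuple coordC Hj mulr0.
- by apply/span_subvP => x /mapP [i _ ->]; exact: CvecC.
- by rewrite size_tuple Hdim.
Qed.
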